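(* Let $F_A=\sum_{i=0}^n\prod_{j=0}^n x_j^{a_{ij}}$ be an invertible polynomial satisfying the Calabi–Yau condition. Let $q_0,\dots,q_n$ be the dual weights (the weights of the transpose matrix $A^T$) and $d^T=\sum_{j=0}^n q_j$. Let $\Xi=\{(A^T)^{-1}\vec v : \vec v\in\mathbb{Z}^{n+1},\ v_0,\dots,v_n\ge1\}$ and $\mathrm{age}(\vec\xi)=\sum_i\xi_i$. Then the set $\{\vec\xi\in\Xi:\mathrm{age}(\vec\xi)=1\}$ consists of exactly one element, namely $\left(\frac{q_0}{d^T},\dots,\frac{q_n}{d^T}\right)$.
   Context: A polynomial $F_A=\sum_{i=0}^n\prod_{j=0}^n x_j^{a_{ij}}$ (one monomial per row of the nonnegative integer matrix $A$) is called invertible if $A$ is invertible, there exist positive integers $r_0,\dots,r_n$ (weights) such that $d:=\sum_{j=0}^n r_j a_{ij}$ is the same for every $i$, and $F_A$ has exactly one critical point, at the origin. It satisfies the Calabi–Yau condition if $d=\sum_{j=0}^n r_j$. The transpose $A^T$ then also defines an invertible polynomial satisfying the Calabi–Yau condition; its weights $q_0,\dots,q_n$ (positive integers with $\sum_{j} q_j a_{ji}=d^T$ for all $i$, where $d^T=\sum_j q_j$) are called the dual weights. *)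

(* Defs.v *)
From HB Require Import structures.
From mathcomp Require Import all_boot all_order all_algebra all_field.
From mathcomp Require Import mpoly.
Set Implicit Arguments. Unset Strict Implicit. Unset Printing Implicit Defensive.
Import Order.TTheory GRing.Theory Num.Theory.
Local Open Scope ring_scope.

Definition FA (n : nat) (A : 'M[nat]_(n.+1)) : {mpoly algC[n.+1]} :=
  \sum_(i < n.+1) \prod_(j < n.+1) 'X_j ^+ (A i j).

Definition critical_point (n : nat) (p : {mpoly algC[n]}) (x : 'I_n -> algC) :=
  forall k : 'I_n, (p^`M(k)).@[x] = 0.

Definition ratmx (n : nat) (A : 'M[nat]_(n.+1)) : 'M[rat]_(n.+1) :=
  map_mx (fun a : nat => a%:R) A.

Definition invertible_poly (n : nat) (A : 'M[nat]_(n.+1))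
    (r : 'I_n.+1 -> nat) (d : nat) : Prop :=
  [/\ ratmx A \in unitmx,
      (forall j, (0 < r j)%N),
      (forall i, (\sum_(j < n.+1) r j * A i j)%N = d) &
      (forall x : 'I_n.+1 -> algC, critical_point (FA A) x <-> x = (fun=> 0))].

Definition calabi_yau (n : nat) (r : 'I_n.+1 -> nat) (d : nat) : Prop :=
  d = (\sum_(j < n.+1) r j)%N.

(* q are dual weights: weights of A^T satisfying the CY condition,
   i.e. sum_j q_j a_ji = d^T := sum_j q_j for all i. *)
Definition dual_weights (n : nat) (A : 'M[nat]_(n.+1)) (q : 'I_n.+1 -> nat) : Prop :=
  (forall j, (0 < q j)%N) /\
  (forall i, (\sum_(j < n.+1) q j * A j i)%N = (\sum_(j < n.+1) q j)%N).

Definition in_Xi (n : nat) (A : 'M[nat]_(n.+1)) (xi : 'cV[rat]_(n.+1)) : Prop :=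
  exists v : 'cV[int]_(n.+1),
    (forall i, 1 <= v i 0) /\
    xi = invmx (ratmx A)^T *m map_mx (fun z : int => z%:~R) v.

Definition age (n : nat) (xi : 'cV[rat]_(n.+1)) : rat := \sum_(i < n.+1) xi i 0.

(* Main.v *)
Require Import Defs.
From HB Require Import structures.
From mathcomp Require Import all_boot all_order all_algebra all_field.
From mathcomp Require Import mpoly.
From mathcomp Require Import ring.
Import Order.TTheory GRing.Theory Num.Theory.
Local Open Scope ring_scope.

Lemma weighted_sum (n : nat) (A : 'M[nat]_(n.+1)) (r : 'I_n.+1 -> nat) (d : nat)
  (Hr : forall i, (\sum_(j < n.+1) r j * A i j)%N = d) (x : 'cV[rat]_(n.+1)) :
  \sum_i (r i)%:R * ((ratmx A)^T *m x) i 0 = d%:R * \sum_k x k 0.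
Proof.
under eq_bigr => i _ do rewrite mxE big_distrr /=.
rewrite exchange_big /= big_distrr /=; apply: eq_bigr => k _.
rewrite -(Hr k) natr_sum big_distrl /=; apply: eq_bigr => j _.
by rewrite !mxE natrM; ring.
Qed.

Lemma col_eq1 (n : nat) (A : 'M[nat]_(n.+1)) (q : 'I_n.+1 -> nat) :
  dual_weights A q ->
  (ratmx A)^T *m (\col_(i < n.+1) ((q i)%:R / (\sum_(j < n.+1) q j)%:R))
  = const_mx 1.
Proof.
move=> [Hq Hs]; apply/matrixP => i z; rewrite !mxE.
have hpos : ((\sum_(j < n.+1) q j)%:R : rat) != 0.
  rewrite pnatr_eq0 -lt0n; apply: (leq_trans (Hq ord0)).
  by rewrite (bigD1 ord0) //= leq_addr.
under eq_bigr => j _ do rewrite !mxE mulrA.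
rewrite -big_distrl /=.
have -> : \sum_(j < n.+1) ((A j i)%:R * (q j)%:R : rat) = (\sum_(j < n.+1) q j)%:R.
  rewrite -(Hs i) natr_sum; apply: eq_bigr => j _; by rewrite natrM mulrC.
by rewrite divff.
Qed.

Theorem mainTheorem2 (n : nat) (A : 'M[nat]_(n.+1))
    (r : 'I_n.+1 -> nat) (d : nat) (q : 'I_n.+1 -> nat) :
  invertible_poly A r d -> calabi_yau r d -> dual_weights A q ->
  forall xi : 'cV[rat]_(n.+1),
    (in_Xi A xi /\ age xi = 1) <->
    xi = \col_(i < n.+1) ((q i)%:R / (\sum_(j < n.+1) q j)%:R).
Proof.
move=> [HU Hr Hd _] Hcy Hdw xi.
have HUT : (ratmx A)^T \in unitmx by rewrite unitmx_tr.
have Ht := @col_eq1 _ _ _ Hdw.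
set t := \col_(i < n.+1) _ in Ht *.
have Htinv : t = invmx (ratmx A)^T *m const_mx 1 by rewrite -Ht mulKmx.
split.
- move=> [[v [Hv ->]] Hage].
  set W := map_mx _ v.
  have HW : (ratmx A)^T *m (invmx (ratmx A)^T *m W) = W by rewrite mulKVmx.
  have Hws := @weighted_sum _ _ _ _ Hd (invmx (ratmx A)^T *m W).
  move: Hws; rewrite HW; move: Hage; rewrite /age => ->.
  rewrite mulr1 Hcy natr_sum => Hws.
  have H0 : \sum_i (r i)%:R * (W i 0 - 1) = 0 :> rat.
    under eq_bigr => i _ do rewrite mulrBr mulr1.
    by rewrite sumrB Hws subrr.
  have Hge : forall i, true -> 0 <= (r i)%:R * (W i 0 - 1) :> rat.
    move=> i _; rewrite mulr_ge0 // subr_ge0 /W mxE.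
    by rewrite -[1 : rat]rat1 ler_int.
  have HW1 : W = const_mx 1.
    apply/matrixP => i z; rewrite (ord1 z) mxE.
    have /eqP := psumr_eq0P Hge H0 (i:=i) isT.
    rewrite mulf_eq0 pnatr_eq0 (negbTE (lt0n_neq0 (Hr i))) /= subr_eq0 => /eqP.
    move=> H; rewrite mxE; move: H; rewrite /W mxE; done.
  by rewrite HW1 Htinv.
- move=> ->; split.
    exists (const_mx 1); split; first by move=> i; rewrite mxE.
    rewrite Htinv; congr (_ *m _); apply/matrixP => i j; by rewrite !mxE.
  rewrite /age /t.
  under eq_bigr => i _ do rewrite mxE.
  rewrite -big_distrl /= -natr_sum divff // pnatr_eq0 -lt0n.
  case: Hdw => Hq _; apply: (leq_trans (Hq ord0)).
  by rewrite (bigD1 ord0) // leq_addr.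
Qed.
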